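(* Let $G\in\mathcal{C}$ and let $C$ be a minimal separator of $G$ that is not a clique. Then $G\setminus C$ has exactly two full components for $C$.
   Context: All graphs are finite and simple; paths are induced paths; a hole is an induced cycle of length at least four. $\mathcal{C}$ is the class of graphs containing no theta, pyramid, prism or turtle as an induced subgraph, where: a theta consists of two nonadjacent vertices $a,b$ and three paths from $a$ to $b$, otherwise vertex-disjoint, any two of which induce a hole; a pyramid consists of a vertex $a$, a triangle $\{b_1,b_2,b_3\}$ and paths $P_i$ from $a$ to $b_i$, pairwise disjoint except at $a$, any two of which induce a hole; a prism consists of two disjoint triangles $\{a_1,a_2,a_3\},\{b_1,b_2,b_3\}$ and pairwise disjoint paths $P_i$ from $a_i$ to $b_i$, any two of which induce a hole; a turtle consists of disjoint paths $P_1$ (from $a_1$ to $b_1$), $P_2$ (from $a_2$ to $b_2$) with $a_1a_2,b_1b_2$ edges and $V(P_1)\cup V(P_2)$ inducing a hole, plus adjacent vertices $x,y$ where $x$ has at least three neighbors in $P_1$ and none in $P_2$, and $y$ has at least three neighbors in $P_2$ and none in $P_1$. A set $C\subseteq V(G)$ is a minimal separator of $G$ if there are two distinct connected components $L,R$ of $G\setminus C$ with $N(L)=N(R)=C$, where $N(X)$ is the set of vertices outside $X$ with a neighbor in $X$. A connected component $D$ of $G\setminus C$ is a full component for $C$ if $N(D)=C$. *)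

(* Defs.v *)
(* A finite simple graph is a symmetric irreflexive relation
   g : rel T on a finType T (the hypotheses are stated in the theorem). *)
From mathcomp Require Import all_boot.
Set Implicit Arguments.
Unset Strict Implicit.
Unset Printing Implicit Defensive.

Section Graphs.
Variables (T : finType) (g : rel T).

Definition V (p : seq T) : {set T} := [set x in p].

Definition ipath (p : seq T) : Prop :=
  uniq p /\
  forall (x0 : T) (i j : nat), i < size p -> j < size p ->
    g (nth x0 p i) (nth x0 p j) = (i == j.+1) || (j == i.+1).

Definition path_from (a b : T) (p : seq T) : Prop :=
  ipath p /\ p != [::] /\ head a p = a /\ last a p = b.

Definition hole (c : seq T) : Prop :=
  uniq c /\ 4 <= size c /\
  forall (x0 : T) (i j : nat), i < size c -> j < size c ->
    g (nth x0 c i) (nth x0 c j) =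
      (i == j.+1 %% size c) || (j == i.+1 %% size c).

Definition induces_hole (S : {set T}) : Prop :=
  exists c, hole c /\ V c = S.

Definition has_theta : Prop :=
  exists (a b : T) (P1 P2 P3 : seq T),
    a != b /\ ~~ g a b /\
    path_from a b P1 /\ path_from a b P2 /\ path_from a b P3 /\
    V P1 :&: V P2 = [set a; b] /\ V P1 :&: V P3 = [set a; b] /\
    V P2 :&: V P3 = [set a; b] /\
    induces_hole (V P1 :|: V P2) /\ induces_hole (V P1 :|: V P3) /\
    induces_hole (V P2 :|: V P3).

Definition has_pyramid : Prop :=
  exists (a b1 b2 b3 : T) (P1 P2 P3 : seq T),
    g b1 b2 /\ g b2 b3 /\ g b1 b3 /\
    path_from a b1 P1 /\ path_from a b2 P2 /\ path_from a b3 P3 /\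
    V P1 :&: V P2 = [set a] /\ V P1 :&: V P3 = [set a] /\
    V P2 :&: V P3 = [set a] /\
    induces_hole (V P1 :|: V P2) /\ induces_hole (V P1 :|: V P3) /\
    induces_hole (V P2 :|: V P3).

Definition has_prism : Prop :=
  exists (a1 a2 a3 b1 b2 b3 : T) (P1 P2 P3 : seq T),
    g a1 a2 /\ g a2 a3 /\ g a1 a3 /\
    g b1 b2 /\ g b2 b3 /\ g b1 b3 /\
    [set a1; a2; a3] :&: [set b1; b2; b3] = set0 /\
    path_from a1 b1 P1 /\ path_from a2 b2 P2 /\ path_from a3 b3 P3 /\
    [disjoint V P1 & V P2] /\ [disjoint V P1 & V P3] /\
    [disjoint V P2 & V P3] /\
    induces_hole (V P1 :|: V P2) /\ induces_hole (V P1 :|: V P3) /\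
    induces_hole (V P2 :|: V P3).

Definition has_turtle : Prop :=
  exists (a1 b1 a2 b2 x y : T) (P1 P2 : seq T),
    path_from a1 b1 P1 /\ path_from a2 b2 P2 /\
    [disjoint V P1 & V P2] /\ g a1 a2 /\ g b1 b2 /\
    induces_hole (V P1 :|: V P2) /\
    x \notin V P1 :|: V P2 /\ y \notin V P1 :|: V P2 /\ g x y /\
    3 <= #|[set v in V P1 | g x v]| /\ [set v in V P2 | g x v] = set0 /\
    3 <= #|[set v in V P2 | g y v]| /\ [set v in V P1 | g y v] = set0.

Definition in_class_C : Prop :=
  ~ has_theta /\ ~ has_pyramid /\ ~ has_prism /\ ~ has_turtle.

Definition nbh (X : {set T}) : {set T} :=
  [set v | (v \notin X) && [exists u in X, g u v]].

Definition rel_minus (C : {set T}) : rel T :=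
  [rel x y | g x y && (x \notin C) && (y \notin C)].

Definition is_component (C D : {set T}) : Prop :=
  exists v, v \notin C /\ D = [set u | connect (rel_minus C) v u].

Definition is_full_component (C D : {set T}) : Prop :=
  is_component C D /\ nbh D = C.

Definition minimal_separator (C : {set T}) : Prop :=
  exists L R : {set T}, L != R /\ is_component C L /\ is_component C R /\
    nbh L = C /\ nbh R = C.

Definition clique (C : {set T}) : Prop :=
  forall x y, x \in C -> y \in C -> x != y -> g x y.

End Graphs.

(* Main.v *)
Require Import Defs.
From mathcomp Require Import all_boot.
From mathcomp Require Import zify.
From Stdlib Require Import Classical.
Set Implicit Arguments. Unset Strict Implicit. Unset Printing Implicit Defensive.

Section Aux.
Variable T : finType.

Fixpoint cpairs (s : seq T) : seq (T * T) :=
  match s with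
  | x :: ((y :: _) as s') => (x, y) :: cpairs s'
  | _ => [::]
  end.

Lemma cpairs_cons x y s : cpairs (x :: y :: s) = (x,y) :: cpairs (y :: s).
Proof. by []. Qed.

Lemma cpairs_cat x s y t :
  cpairs (x :: s ++ y :: t) = cpairs (x :: s) ++ (last x s, y) :: cpairs (y :: t).
Proof.
elim: s x => [|z s IH] x; first by [].
by rewrite cat_cons cpairs_cons IH cpairs_cons.
Qed.

Lemma cpairs_nth x0 s u v : (u,v) \in cpairs s <->
  exists2 k, k.+1 < size s & nth x0 s k = u /\ nth x0 s k.+1 = v.
Proof.
elim: s => [|a s IH]; first by split => // [[]].
case: s IH => [|b s] IH; first by split => // [[[|k]]].
rewrite /= in_cons; split.
- case/orP => [/eqP [-> ->]|/IH [k Hk [Hu Hv]]]; first by exists 0.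
  by exists k.+1.
- case => [[|k]] /= Hk [Hu Hv]; first by rewrite Hu Hv eqxx.
  apply/orP; right; apply/IH; by exists k.
Qed.

Lemma mem_cpairs s u v : (u,v) \in cpairs s -> (u \in s) && (v \in s).
Proof.
move/(cpairs_nth u) => [k Hk [<- <-]].
by apply/andP; split; apply: mem_nth => //; apply: ltnW.
Qed.

Lemma cpairs_idx x0 s i j : uniq s -> i < size s -> j < size s ->
  ((nth x0 s i, nth x0 s j) \in cpairs s) = (j == i.+1).
Proof.
move=> U Hi Hj; apply/idP/eqP.
- move/(cpairs_nth x0) => [k Hk [Hu Hv]].
  move/eqP: Hu; rewrite nth_uniq //; last exact: ltnW.
  move=> /eqP Eki; subst k.
  by move/eqP: Hv; rewrite nth_uniq // => /eqP ->.
- move=> Ej; subst j; apply/(cpairs_nth x0); by exists i.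
Qed.

Lemma cpairs_rev s u v : ((u,v) \in cpairs (rev s)) = ((v,u) \in cpairs s).
Proof.
apply/idP/idP.
- move/(cpairs_nth u) => [k Hk [Hu Hv]]; apply/(cpairs_nth u).
  rewrite size_rev in Hk.
  exists (size s - k.+2); first by lia.
  rewrite nth_rev // in Hu; rewrite nth_rev // in Hv; last by lia.
  split; first by rewrite -Hv.
  have -> : (size s - k.+2).+1 = size s - k.+1 by lia.
  exact: Hu.
- move/(cpairs_nth u) => [k Hk [Hu Hv]]; apply/(cpairs_nth u).
  exists (size s - k.+2); first by rewrite size_rev; lia.
  rewrite !nth_rev; try lia.
  split.
    have -> : size s - (size s - k.+2).+1 = k.+1 by lia.
    exact: Hv.
  have -> : size s - (size s - k.+2).+2 = k by lia.
  exact: Hu.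
Qed.

Lemma cpairs_cyc x0 a s i j : uniq (a :: s) -> i < size (a :: s) -> j < size (a :: s) ->
  ((nth x0 (a :: s) i, nth x0 (a :: s) j) \in cpairs (rcons (a :: s) a)) =
  (j == i.+1 %% size (a :: s)).
Proof.
move=> U Hi Hj; apply/idP/eqP.
- move/(cpairs_nth x0) => [k Hk [Hu Hv]].
  rewrite size_rcons in Hk.
  have Hks : k < size (a :: s) by clear -Hk; simpl in *; lia.
  rewrite nth_rcons Hks in Hu.
  move/eqP: Hu; rewrite nth_uniq //.
  move=> /eqP Eki; subst k.
  rewrite nth_rcons in Hv.
  case: ltnP Hv => H1 Hv.
    move/eqP: Hv; rewrite nth_uniq // => /eqP <-.
    by rewrite modn_small.
  have E : i.+1 = size (a :: s) by simpl in *; lia.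
  rewrite E eqxx in Hv.
  have : nth x0 (a :: s) 0 = nth x0 (a :: s) j by rewrite -Hv.
  move/eqP; rewrite nth_uniq // => /eqP <-.
  by rewrite E modnn.
- move=> ->; apply/(cpairs_nth x0); exists i; first by rewrite size_rcons; simpl in *; lia.
  rewrite nth_rcons Hi; split => //.
  rewrite nth_rcons; case: ltnP => H1.
    by rewrite modn_small.
  have E : i.+1 = size (a :: s) by simpl in *; lia.
  by rewrite E eqxx modnn.
Qed.

Definition cp s u v := ((u,v) \in cpairs s) || ((v,u) \in cpairs s).

Lemma cp_mem s u v : cp s u v -> (u \in s) && (v \in s).
Proof. by case/orP => /mem_cpairs // /andP[-> ->]. Qed.

Lemma ipath_of (g : rel T) s : uniq s -> {in s &, forall u v, g u v = cp s u v} -> ipath g s.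
Proof.
move=> U H; split => // x0 i j Hi Hj.
by rewrite H ?mem_nth // /cp !cpairs_idx // orbC.
Qed.

Lemma hole_of (g : rel T) a s : uniq (a :: s) -> 4 <= size (a :: s) ->
  {in a :: s &, forall u v, g u v = cp (rcons (a :: s) a) u v} -> hole g (a :: s).
Proof.
move=> U S H; split => //; split => // x0 i j Hi Hj.
by rewrite H ?mem_nth // /cp !cpairs_cyc // orbC.
Qed.

End Aux.

Lemma min_ex (P : nat -> Prop) n : P n -> exists m, P m /\ forall k, P k -> m <= k.
Proof.
move: n; elim/ltn_ind => n IH Pn.
case: (classic (exists k, k < n /\ P k)) => [[k [lt Pk]]|N].
  exact: IH k lt Pk.
exists n; split => // k Pk; rewrite leqNgt; apply/negP => lt; apply: N; by exists k.
Qed.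

Section G.
Variables (T : finType) (g : rel T).
Hypothesis Hsym : symmetric g.
Hypothesis Hirr : irreflexive g.
Variable C : {set T}.

Notation rm := (rel_minus g C).
Notation comp := (is_component g C).

Lemma path_notC v p : path rm v p -> all (fun w => w \notin C) p.
Proof.
elim: p v => [|a p IH] v //= /andP[/andP[/andP[_ _] Ha] /IH ->].
by rewrite Ha.
Qed.

Lemma comp_notC D u : comp D -> u \in D -> u \notin C.
Proof.
case=> v [Hv ->]; rewrite inE => /connectP [p Hp ->].
have := mem_last v p; rewrite in_cons => /orP [/eqP -> //|Hl].
by move/allP: (path_notC Hp) => /(_ _ Hl).
Qed.

Lemma rm_sym : symmetric rm.
Proof. by move=> a b; rewrite /rel_minus /= Hsym andbAC. Qed.

Lemma comp_step D u w : comp D -> u \in D -> w \notin C -> g u w -> w \in D.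
Proof.
move=> HD Hu Hw Huw; have Hu' := comp_notC HD Hu.
case: HD Hu => v [Hv ->]; rewrite !inE => Hvu.
apply: connect_trans Hvu (connect1 _).
by rewrite /rel_minus /= Huw Hu' Hw.
Qed.

Lemma comp_conn D u w : comp D -> u \in D -> w \in D -> connect rm u w.
Proof.
case=> v [_ ->]; rewrite !inE => Hu Hw.
apply: connect_trans _ Hw.
by rewrite (sym_connect_sym rm_sym).
Qed.

Lemma comp_eq D1 D2 w : comp D1 -> comp D2 -> w \in D1 -> w \in D2 -> D1 = D2.
Proof.
move=> H1 H2 w1 w2.
case: (H1) => v1 [_ E1]; case: (H2) => v2 [_ E2].
rewrite E1 inE in w1; rewrite E2 inE in w2.
have h12 : connect rm v1 v2.
  apply: connect_trans w1 _; by rewrite (sym_connect_sym rm_sym).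
apply/setP => z; rewrite E1 E2 !inE; apply/idP/idP => H.
  apply: connect_trans _ H; by rewrite (sym_connect_sym rm_sym).
exact: connect_trans h12 H.
Qed.

Lemma comp_noedge D1 D2 u w : comp D1 -> comp D2 -> D1 != D2 ->
  u \in D1 -> w \in D2 -> ~~ g u w.
Proof.
move=> H1 H2 Hne Hu Hw; apply/negP => Huw.
have Hw1 := comp_step H1 Hu (comp_notC H2 Hw) Huw.
by rewrite (comp_eq H1 H2 Hw1 Hw) eqxx in Hne.
Qed.

Lemma path_in D u p : comp D -> u \in D -> path rm u p -> forall z, z \in p -> z \in D.
Proof.
move=> HD; elim: p u => [|a p IH] u Hu //= /andP [Hua Hp] z.
have Ha : a \in D.
  move: Hua => /= /andP[/andP[Hg _] Ha]; exact: comp_step HD Hu Ha Hg.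
rewrite in_cons => /orP[/eqP ->|Hz] //.
exact: IH Ha Hp z Hz.
Qed.

Lemma pathA a q1 u m q3 : path g a (q1 ++ u :: m ++ u :: q3) -> path g a (q1 ++ u :: q3).
Proof.
rewrite cat_path => /andP[H1] /= /andP[H2]; rewrite cat_path => /andP[_] /= /andP[_ H3].
by rewrite cat_path H1 /= H2 H3.
Qed.

Lemma pathB a q1 u m w q3 : path g a (q1 ++ u :: m ++ w :: q3) -> g u w ->
  path g a (q1 ++ u :: w :: q3).
Proof.
rewrite cat_path => /andP[H1] /= /andP[H2]; rewrite cat_path => /andP[_] /= /andP[_ H3] H4.
by rewrite cat_path H1 /= H2 H3 H4.
Qed.

Lemma pathA0 a m q3 : path g a (m ++ a :: q3) -> path g a q3.
Proof. by rewrite cat_path => /andP[_] /= /andP[_]. Qed.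

Lemma pathB0 a m w q3 : path g a (m ++ w :: q3) -> g a w -> path g a (w :: q3).
Proof. by rewrite cat_path => /andP[_] /= /andP[_ H] ->. Qed.

Lemma path_cp a q u v : path g a q -> (u,v) \in cpairs (a :: q) -> g u v.
Proof.
elim: q a => [|b q IH] a //= /andP[Hab Hq].
rewrite in_cons => /orP[/eqP [-> ->] //|]; exact: IH.
Qed.

Lemma cp_g a q u v : path g a q -> cp (a :: q) u v -> g u v.
Proof.
move=> Hp /orP[|] H; first exact: path_cp H.
by rewrite Hsym; exact: path_cp H.
Qed.

Lemma notuniq_split (s : seq T) : ~~ uniq s -> exists s1 u s2 s3, s = s1 ++ u :: s2 ++ u :: s3.
Proof.
elim: s => [|a s IH] //=; rewrite negb_and negbK => /orP [Ha|Hu].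
  case/splitPr: Ha => s2 s3; by exists [::], a, s2, s3.
case: (IH Hu) => s1 [u [s2 [s3 ->]]]; by exists (a :: s1), u, s2, s3.
Qed.

Lemma split2 (s : seq T) u v : u \in s -> v \in s -> u != v ->
  exists s1 s2 s3, s = s1 ++ u :: s2 ++ v :: s3 \/ s = s1 ++ v :: s2 ++ u :: s3.
Proof.
move=> Hu Hv Huv; move: Hv; case/splitPr: Hu => s1 s2.
rewrite mem_cat in_cons => /orP[Hv1|/orP[/eqP E|Hv2]].
- case/splitPr: Hv1 => t1 t2; exists t1, t2, s2; right; by rewrite -catA.
- by rewrite E eqxx in Huv.
- case/splitPr: Hv2 => t1 t2; exists s1, t1, t2; by left.
Qed.

Lemma cpairs_mid (s1 : seq T) a b s3 : (a,b) \in cpairs (s1 ++ a :: b :: s3).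
Proof.
case: s1 => [|c s1]; first by rewrite cpairs_cons mem_head.
by rewrite cat_cons cpairs_cat mem_cat in_cons cpairs_cons mem_head !orbT.
Qed.

Section Walk.
Variables (D : {set T}) (x y : T).
Hypotheses (HD : comp D) (Hfull : nbh g D = C) (Hx : x \in C) (Hy : y \in C)
  (Hxy : x != y) (Hnxy : ~~ g x y).

Definition W p := path g x p /\ last x p = y /\ (forall z, z \in p -> (z \in D) || (z == y)).

Lemma W_exists : exists p, W p.
Proof.
move: (Hx) (Hy); rewrite -Hfull !inE => /andP[_ /existsP[u /andP[Hu Hux]]].
move=> /andP[_ /existsP[w /andP[Hw Hwy]]].
case/connectP: (comp_conn HD Hu Hw) => q Hq Ew.
exists (u :: q ++ [:: y]); split; [|split].
- rewrite /= Hsym Hux /= cat_path /= -Ew Hwy andbT.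
  rewrite andbT; apply: (sub_path _ Hq) => a b; rewrite /rel_minus /= => /andP[/andP[]] //.
- by rewrite /= last_cat.
- move=> z; rewrite in_cons mem_cat in_cons => /orP[/eqP->|/orP[Hz|/orP[->|//]]].
  + by rewrite Hu.
  + by rewrite (path_in HD Hu Hq Hz).
  + by rewrite orbT.
Qed.

Lemma W_sub p p' : W p -> path g x p' -> last x p' = y -> {subset p' <= p} -> W p'.
Proof. move=> [_ [_ H]] H1 H2 Hs; split => //; split => // z /Hs; exact: H. Qed.

Lemma last_split (p : seq T) : last x p = y -> exists A, p = A ++ [:: y].
Proof.
case/lastP: p => [/= E|A z]; first by move: Hxy; rewrite E eqxx.
by rewrite last_rcons => ->; exists A; rewrite cats1.
Qed.

Lemma walk_exists : exists A : seq T,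
  [/\ A != [::], (forall z, z \in A -> z \in D), uniq (x :: A ++ [:: y]) &
   {in x :: A ++ [:: y] &, forall u v, g u v = cp (x :: A ++ [:: y]) u v}].
Proof.
case: W_exists => p0 Hp0.
case: (min_ex (P := fun m => exists p, W p /\ size p = m) (ex_intro _ p0 (conj Hp0 erefl))).
move=> m [[p [Wp Sp]] Hmin]; subst m.
have short : forall p', W p' -> size p' < size p -> False.
  move=> p' W' S'; have := Hmin _ (ex_intro _ p' (conj W' erefl)); by rewrite leqNgt S'.
case: (Wp) => Pp [Lp Ip].
have U : uniq (x :: p).
  apply/negPn/negP => /notuniq_split [s1 [u [s2 [s3]]]].
  case: s1 => [|a s1] /= [E1 E2].
  - subst u; apply: (short s3).
    + apply: (W_sub Wp).
      * by apply: (@pathA0 x s2); rewrite -E2.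
      * by rewrite -Lp E2 last_cat.
      * by move=> z Hz; rewrite E2 mem_cat in_cons Hz !orbT.
    + rewrite E2 size_cat /=; lia.
  - subst a; apply: (short (s1 ++ u :: s3)).
    + apply: (W_sub Wp).
      * by apply: (@pathA x s1 u s2); rewrite -E2.
      * by rewrite -Lp E2 !last_cat /= last_cat.
      * move=> z; rewrite E2; rewrite !(mem_cat, in_cons).
        by move=> /orP[->|/orP[->|->]]; rewrite ?orbT.
    + rewrite E2 !size_cat /= size_cat /=; lia.
have mid : forall s1 s2 s3 a b, x :: p = s1 ++ a :: s2 ++ b :: s3 -> g a b -> s2 = [::].
  move=> s1 s2 s3 a b E Hab; case: s2 E => [//|c s2] E; exfalso.
  case: s1 E => [|a1 s1] /= [E1 E2].
  - subst a; apply: (short (b :: s3)).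
    + apply: (W_sub Wp).
      * by apply: (@pathB0 x (c :: s2) b s3 _ Hab); rewrite cat_cons -E2.
      * by rewrite -Lp E2 /= last_cat.
      * by move=> z Hz; rewrite E2 in_cons mem_cat Hz !orbT.
    + rewrite E2 /= size_cat /=; lia.
  - subst a1; apply: (short (s1 ++ a :: b :: s3)).
    + apply: (W_sub Wp).
      * by apply: (@pathB x s1 a (c :: s2) b s3 _ Hab); rewrite -E2.
      * by rewrite -Lp E2 !last_cat /= last_cat.
      * move=> z; rewrite E2; rewrite !(mem_cat, in_cons).
        by move=> /orP[->|/orP[->|/orP[->|->]]]; rewrite ?orbT.
    + rewrite E2 !size_cat /= size_cat /=; lia.
have Adj : {in x :: p &, forall u v, g u v = cp (x :: p) u v}.
  move=> u v Hu Hv; apply/idP/idP; last exact: cp_g.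
  move=> Huv; have Hne : u != v by apply/eqP => E; rewrite E Hirr in Huv.
  case: (split2 Hu Hv Hne) => s1 [s2 [s3 [E|E]]].
  - by rewrite E (mid _ _ _ _ _ E Huv) /cp cpairs_mid.
  - rewrite Hsym in Huv.
    by rewrite E (mid _ _ _ _ _ E Huv) /cp cpairs_mid orbT.
case: (last_split Lp) => A EA; subst p.
exists A; split => //.
- apply/eqP => EA; subst A; move: Pp => /=; by rewrite (negbTE Hnxy).
- move=> z Hz; move: (Ip z); rewrite mem_cat Hz => /(_ isT) /orP[//|/eqP Ez].
  subst z; move: U; rewrite /= cats1 rcons_uniq => /andP[_ /andP[]].
  by rewrite Hz.
Qed.

End Walk.

Section Two.
Variables (D1 D2 : {set T}) (x y : T) (A B : seq T).
Hypotheses (H1 : comp D1) (H2 : comp D2) (Hne : D1 != D2) (Hx : x \in C) (Hy : y \in C)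
  (HA : forall z, z \in A -> z \in D1) (HB : forall z, z \in B -> z \in D2)
  (nA : A != [::]) (nB : B != [::])
  (UA : uniq (x :: A ++ [:: y])) (UB : uniq (x :: B ++ [:: y]))
  (AdjA : {in x :: A ++ [:: y] &, forall u v, g u v = cp (x :: A ++ [:: y]) u v})
  (AdjB : {in x :: B ++ [:: y] &, forall u v, g u v = cp (x :: B ++ [:: y]) u v}).

Lemma memP (S : seq T) z : (z \in x :: S ++ [:: y]) = [|| z == x, z \in S | z == y].
Proof. by rewrite in_cons mem_cat mem_seq1. Qed.

Lemma memc z : (z \in x :: A ++ y :: rev B) = [|| z == x, z \in A, z == y | z \in B].
Proof. by rewrite in_cons mem_cat in_cons mem_rev. Qed.

Lemma A_notxy z : z \in A -> [&& z != x, z != y & z \notin B].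
Proof.
move=> Hz; have Hz1 := HA Hz; have nC := comp_notC H1 Hz1.
apply/and3P; split.
- by apply/eqP => E; move: nC; rewrite E Hx.
- by apply/eqP => E; move: nC; rewrite E Hy.
- apply/negP => /HB Hz2; have E := comp_eq H1 H2 Hz1 Hz2.
  by move: Hne; rewrite E eqxx.
Qed.

Lemma B_notxy z : z \in B -> [&& z != x, z != y & z \notin A].
Proof.
move=> Hz; have Hz1 := HB Hz; have nC := comp_notC H2 Hz1.
apply/and3P; split.
- by apply/eqP => E; move: nC; rewrite E Hx.
- by apply/eqP => E; move: nC; rewrite E Hy.
- apply/negP => /HA Hz2; have E := comp_eq H1 H2 Hz2 Hz1.
  by move: Hne; rewrite E eqxx.
Qed.

Lemma inter2 : V (x :: A ++ [:: y]) :&: V (x :: B ++ [:: y]) = [set x; y].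
Proof.
apply/setP => z; rewrite in_setI /V !in_set !memP !in_set1.
case ZA: (z \in A).
  by move: (A_notxy ZA) => /and3P[/negbTE-> /negbTE-> /negbTE->].
case ZB: (z \in B).
  by move: (B_notxy ZB) => /and3P[/negbTE-> /negbTE-> _].
by case: (z == x); case: (z == y).
Qed.

Lemma Lc u v : ((u,v) \in cpairs (rcons (x :: A ++ y :: rev B) x)) =
  ((u,v) \in cpairs (x :: A ++ [:: y])) || ((v,u) \in cpairs (x :: B ++ [:: y])).
Proof.
rewrite -(cpairs_rev (x :: B ++ [:: y]) u v).
have -> : rev (x :: B ++ [:: y]) = y :: rcons (rev B) x.
  by rewrite rev_cons rev_cat.
rewrite rcons_cons rcons_cat rcons_cons !cpairs_cat mem_cat in_cons mem_cat in_cons.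
by rewrite (_ : cpairs [:: y] = [::]) // in_nil orbF -orbA.
Qed.

Lemma hole2 : induces_hole g (V (x :: A ++ [:: y]) :|: V (x :: B ++ [:: y])).
Proof.
have UB' : uniq B by move: UB => /= /andP[_]; rewrite cat_uniq => /andP[].
exists (x :: A ++ y :: rev B); split.
- apply: hole_of.
  + rewrite (_ : x :: A ++ y :: rev B = (x :: A ++ [:: y]) ++ rev B); last by rewrite /= -catA.
    rewrite cat_uniq UA rev_uniq UB' andbT /=.
    apply/hasPn => z; rewrite mem_rev => ZB; rewrite memP.
    by move: (B_notxy ZB) => /and3P[/negbTE-> /negbTE-> /negbTE->].
  + have : 0 < size A by rewrite lt0n size_eq0.
    have : 0 < size B by rewrite lt0n size_eq0.
    rewrite /= size_cat /= size_rev; lia.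
  + move=> u v Hu Hv; rewrite /cp (Lc u v) (Lc v u).
    have E : forall a b c d : bool, (a || b) || (c || d) = (a || c) || (d || b)
      by case; case; case; case.
    rewrite E -/(cp (x :: A ++ [:: y]) u v) -/(cp (x :: B ++ [:: y]) u v).
    case E1: ((u \in x :: A ++ [:: y]) && (v \in x :: A ++ [:: y])).
      case/andP: E1 => u1 v1; rewrite (AdjA u1 v1).
      case E2: (cp (x :: B ++ [:: y]) u v); last by rewrite orbF.
      have := cp_mem E2 => /andP[u2 v2].
      by rewrite orbT -(AdjA u1 v1) (AdjB u2 v2).
    have F1 : cp (x :: A ++ [:: y]) u v = false by apply/negP => /cp_mem; rewrite E1.
    rewrite F1 /=.
    case E2: ((u \in x :: B ++ [:: y]) && (v \in x :: B ++ [:: y])).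
      by case/andP: E2 => u2 v2; rewrite (AdjB u2 v2).
    have -> : cp (x :: B ++ [:: y]) u v = false by apply/negP => /cp_mem; rewrite E2.
    apply/negbTE.
    have toB : forall z, z \in x :: A ++ y :: rev B -> z \notin x :: A ++ [:: y] -> z \in B.
      move=> z; rewrite memc memP.
      by case: (z == x); case: (z \in A); case: (z == y).
    have toA : forall z, z \in x :: A ++ y :: rev B -> z \notin x :: B ++ [:: y] -> z \in A.
      move=> z; rewrite memc memP.
      by case: (z == x); case: (z \in B); case: (z == y); case: (z \in A).
    have inB : forall z, z \in B -> z \in x :: B ++ [:: y].
      by move=> z Hz; rewrite memP Hz orbT.
    case: (boolP (u \in x :: A ++ [:: y])) => u1.
    * have v1 : v \notin x :: A ++ [:: y] by move: E1; rewrite u1 /= => ->.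
      have vB := toB _ Hv v1.
      have u2 : u \notin x :: B ++ [:: y] by move: E2; rewrite (inB _ vB) andbT => ->.
      exact: comp_noedge H1 H2 Hne (HA (toA _ Hu u2)) (HB vB).
    * have uB := toB _ Hu u1.
      have v2 : v \notin x :: B ++ [:: y] by move: E2; rewrite (inB _ uB) /= => ->.
      rewrite Hsym; exact: comp_noedge H1 H2 Hne (HA (toA _ Hv v2)) (HB uB).
- apply/setP => z; rewrite in_setU /V !in_set memc !memP.
  by case: (z == x); case: (z \in A); case: (z == y); case: (z \in B).
Qed.

End Two.

End G.

Lemma pf_of {T : finType} {g : rel T} {x y} {A : seq T} : uniq (x :: A ++ [:: y]) ->
  {in x :: A ++ [:: y] &, forall u v, g u v = cp (x :: A ++ [:: y]) u v} ->
  path_from g x y (x :: A ++ [:: y]).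
Proof.
move=> U H; split; first exact: ipath_of.
by split => //; split => //=; rewrite last_cat.
Qed.

Unset Implicit Arguments.

Theorem lemma3p2 (T : finType) (g : rel T) (C : {set T}) :
  symmetric g -> irreflexive g ->
  in_class_C g -> minimal_separator g C -> ~ clique g C ->
  exists D1 D2 : {set T},
    D1 != D2 /\ is_full_component g C D1 /\ is_full_component g C D2 /\
    forall D : {set T}, is_full_component g C D -> D = D1 \/ D = D2.
Proof.
move=> Hsym Hirr [Nth _] [L [R [LR [HL [HR [NL NR]]]]]] Ncl.
have [x [y [Hx [Hy [Hxy Hnxy]]]]] :
    exists x y, x \in C /\ y \in C /\ x != y /\ ~~ g x y.
  apply: NNPP => N; apply: Ncl => a b Ha Hb Hab; apply: NNPP => Ng; apply: N.
  exists a, b; do !split => //; by apply/negP.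
exists L, R; split => //; split; first by split. split; first by split.
move=> D [HD ND].
case: (eqVneq D L) => [->|DL]; first by left.
case: (eqVneq D R) => [->|DR]; first by right.
exfalso; apply: Nth.
case: (walk_exists Hsym Hirr HL NL Hx Hy Hxy Hnxy) => A [nA HA UA AA].
case: (walk_exists Hsym Hirr HR NR Hx Hy Hxy Hnxy) => B [nB HB UB AB].
case: (walk_exists Hsym Hirr HD ND Hx Hy Hxy Hnxy) => E [nE HE UE AE].
have LD : L != D by rewrite eq_sym.
have RD : R != D by rewrite eq_sym.
exists x, y, (x :: A ++ [:: y]), (x :: B ++ [:: y]), (x :: E ++ [:: y]).
split => //; split => //.
split; first exact: (pf_of UA AA).
split; first exact: (pf_of UB AB).
split; first exact: (pf_of UE AE).
split; first exact: (inter2 Hsym HL HR LR Hx Hy HA HB).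
split; first exact: (inter2 Hsym HL HD LD Hx Hy HA HE).
split; first exact: (inter2 Hsym HR HD RD Hx Hy HB HE).
split; first exact: (hole2 Hsym HL HR LR Hx Hy HA HB nA nB UA UB AA AB).
split; first exact: (hole2 Hsym HL HD LD Hx Hy HA HE nA nE UA UE AA AE).
exact: (hole2 Hsym HR HD RD Hx Hy HB HE nB nE UB UE AB AE).
Qed.
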